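(* A function $r:(0,\infty)\to(0,\infty)$ is of the form $r=r[g]$ for some complete Bernstein function $g$ if and only if $t\mapsto t\,r(t)$ is a Bernstein function.
   Context: A Bernstein function is $h\in C^\infty(0,\infty)$ with $h\ge0$ and $(-1)^nh^{(n)}\le0$ for $n\ge1$; equivalently $h(z)=a+bz+\int_{(0,\infty)}(1-e^{-sz})\mu(\mathrm ds)$ with $a,b\ge0$, $\mu$ positive Radon on $(0,\infty)$, $\int\frac{s}{1+s}\mu(\mathrm ds)<\infty$ (written $h\sim(a,b,\mu)$). It is a complete Bernstein function if $\mu$ has a completely monotone density with respect to Lebesgue measure (completely monotone: $C^\infty$ with $(-1)^nm^{(n)}\ge0$ for all $n\ge0$). For $g\sim(a,b,\mu)$, the rate function is $r[g](t):=\frac a2+\frac bt+\int_{(0,\infty)}\min(s/t,1)\mu(\mathrm ds)$, $t>0$. *)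

(* Defs.v *)
From Stdlib Require Import Reals Lra.
Open Scope R_scope.

(* [smooth_on_pos h D]: D is a sequence of successive derivatives of h on
   (0,oo): D 0 = h on (0,oo) and D (n+1) is the derivative of D n there.
   Existence of such D is exactly h in C^oo(0,oo). *)
Definition smooth_on_pos (h : R -> R) (D : nat -> R -> R) : Prop :=
  (forall x, 0 < x -> D 0%nat x = h x) /\
  (forall n x, 0 < x -> derivable_pt_lim (D n) x (D (S n) x)).

Definition bernstein (h : R -> R) : Prop :=
  exists D : nat -> R -> R, smooth_on_pos h D /\
    (forall x, 0 < x -> 0 <= h x) /\
    (forall n x, (1 <= n)%nat -> 0 < x -> (-1) ^ n * D n x <= 0).

Definition completely_monotone (m : R -> R) : Prop :=
  exists D : nat -> R -> R, smooth_on_pos m D /\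
    (forall n x, 0 < x -> 0 <= (-1) ^ n * D n x).

Definition improper_int_pos (f : R -> R) (l : R) : Prop :=
  forall eps, 0 < eps -> exists delta M, 0 < delta /\
    forall a b, 0 < a -> a < delta -> M < b ->
      exists pr : Riemann_integrable f a b, Rabs (RiemannInt pr - l) < eps.

(* A complete Bernstein function g ~ (a, b, mu) with mu(ds) = m(s) ds,
   m completely monotone, int s/(1+s) mu(ds) < oo. *)
Definition cbf_triple (a b : R) (m : R -> R) : Prop :=
  0 <= a /\ 0 <= b /\ completely_monotone m /\
  exists l, improper_int_pos (fun s => s / (1 + s) * m s) l.

Definition rate_of_triple (a b : R) (m : R -> R) (t : R) (v : R) : Prop :=
  exists I, improper_int_pos (fun s => Rmin (s / t) 1 * m s) I /\
    v = a / 2 + b / t + I.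

(* Main.v *)
Require Import Defs.
From Stdlib Require Import Reals Lra Lia Classical.
From Coquelicot Require Import Coquelicot.
Open Scope R_scope.

Definition Cp (f : R -> R) := forall x, 0 < x -> continuous f x.

Lemma loc_pos t : 0 < t -> locally t (fun b => 0 < b).
Proof. intros Ht. exact (open_gt 0 t Ht). Qed.

Lemma exR f a b : Cp f -> 0 < a -> 0 < b -> ex_RInt f a b.
Proof.
  intros Hf Ha Hb. apply (@ex_RInt_continuous R_CompleteNormedModule). intros z Hz. apply Hf.
  destruct Hz as [Hz _]. unfold Rmin in Hz. destruct (Rle_dec a b); lra.
Qed.

Lemma Cp_mult f g : Cp f -> Cp g -> Cp (fun x => f x * g x).
Proof. intros Hf Hg x Hx. apply (continuous_mult f g); auto. Qed.

Lemma Cp_id : Cp (fun x => x).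
Proof. intros x _. apply continuous_id. Qed.

Lemma smooth_cont h D n : smooth_on_pos h D -> Cp (D n).
Proof.
  intros [_ HD] x Hx. apply (@ex_derive_continuous R_AbsRing R_NormedModule). exists (D (S n) x).
  apply is_derive_Reals. auto.
Qed.

Lemma smooth_cont0 h D : smooth_on_pos h D -> Cp h.
Proof.
  intros HS x Hx. apply continuous_ext_loc with (D 0%nat).
  - apply (filter_imp (fun b => 0 < b)). intros y Hy. apply HS; auto. apply loc_pos; auto.
  - apply (smooth_cont h D 0 HS); auto.
Qed.

Lemma ftc h D n x y : smooth_on_pos h D -> 0 < x -> 0 < y ->
  RInt (D (S n)) x y = D n y - D n x.
Proof.
  intros HS Hx Hy. apply is_RInt_unique.
  apply (is_RInt_derive (D n) (D (S n))).
  - intros z Hz. apply is_derive_Reals. apply HS.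
    destruct Hz as [Hz _]. unfold Rmin in Hz. destruct (Rle_dec x y); lra.
  - intros z Hz. apply (smooth_cont h D (S n) HS).
    destruct Hz as [Hz _]. unfold Rmin in Hz. destruct (Rle_dec x y); lra.
Qed.

Lemma deriv_RInt f t : Cp f -> 0 < t -> is_derive (fun u => RInt f 1 u) t (f t).
Proof.
  intros Hf Ht. apply (is_derive_RInt f (fun u => RInt f 1 u) 1).
  - apply (filter_imp (fun b => 0 < b)). intros y Hy. apply (@RInt_correct R_CompleteNormedModule). apply exR; auto; lra.
    apply loc_pos; auto.
  - apply Hf; auto.
Qed.

Lemma improper_RInt f l : improper_int_pos f l <->
  (forall eps, 0 < eps -> exists delta M, 0 < delta /\
    forall a b, 0 < a -> a < delta -> M < b -> ex_RInt f a b /\ Rabs (RInt f a b - l) < eps).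
Proof.
  split.
  - intros H eps He. destruct (H eps He) as (d & M & Hd & H2). exists d, M. split; auto.
    intros a b Ha Had Hb. destruct (H2 a b Ha Had Hb) as [pr Hpr]. split.
    apply ex_RInt_Reals_1; auto. rewrite (RInt_Reals f a b pr). auto.
  - intros H eps He. destruct (H eps He) as (d & M & Hd & H2). exists d, M. split; auto.
    intros a b Ha Had Hb. destruct (H2 a b Ha Had Hb) as [pr Hpr].
    exists (ex_RInt_Reals_0 f a b pr). rewrite <- RInt_Reals. auto.
Qed.

Lemma zero_eps x : (forall e, 0 < e -> Rabs x <= e) -> x = 0.
Proof.
  intros H. destruct (Req_dec x 0); auto. exfalso.
  assert (0 < Rabs x) by (apply Rabs_pos_lt; auto).
  specialize (H (Rabs x / 2) ltac:(lra)). lra.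
Qed.

Lemma isd_minus f g x a b : is_derive f x a -> is_derive g x b -> is_derive (fun y => f y - g y) x (a - b).
Proof. intros. exact (@is_derive_minus R_AbsRing R_NormedModule f g x a b H H0). Qed.
Lemma isd_plus f g x a b : is_derive f x a -> is_derive g x b -> is_derive (fun y => f y + g y) x (a + b).
Proof. intros. exact (@is_derive_plus R_AbsRing R_NormedModule f g x a b H H0). Qed.
Lemma isd_opp f x a : is_derive f x a -> is_derive (fun y => - f y) x (- a).
Proof. intros. exact (@is_derive_opp R_AbsRing R_NormedModule f x a H). Qed.
Lemma isd_mult f g x a b : is_derive f x a -> is_derive g x b -> is_derive (fun y => f y * g y) x (a * g x + f x * b).
Proof. intros. exact (@is_derive_mult R_AbsRing f g x a b H H0 Rmult_comm). Qed.
Lemma isd_id x : is_derive (fun y => y) x 1.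
Proof. exact (@is_derive_id R_AbsRing x). Qed.
Lemma isd_const (c : R) x : is_derive (fun _ => c) x 0.
Proof. exact (@is_derive_const R_AbsRing R_NormedModule c x). Qed.
Lemma isd_val (f : R -> R) (x a b : R) : is_derive f x a -> a = b -> is_derive f x b.
Proof. intros; subst; auto. Qed.
Lemma Cp_opp f : Cp f -> Cp (fun x => - f x).
Proof. intros Hf x Hx. exact (@continuous_opp R_UniformSpace R_AbsRing R_NormedModule f x (Hf x Hx)). Qed.
Lemma Cp_frac : Cp (fun s => s / (1 + s)).
Proof. intros s Hs. apply (@ex_derive_continuous R_AbsRing R_NormedModule). auto_derive. lra. Qed.
Lemma RInt_eq f F a b : (forall z, Rmin a b <= z <= Rmax a b -> is_derive F z (f z)) ->
  (forall z, Rmin a b <= z <= Rmax a b -> continuous f z) -> RInt f a b = F b - F a.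
Proof. intros H1 H2. apply is_RInt_unique. exact (@is_RInt_derive R_CompleteNormedModule F f a b H1 H2). Qed.
Lemma minpos a b z : 0 < a -> 0 < b -> Rmin a b <= z -> 0 < z.
Proof. intros. unfold Rmin in *. destruct (Rle_dec a b); lra. Qed.

Definition BH (h : R->R) (D : nat -> R -> R) := smooth_on_pos h D /\ (forall x, 0<x -> 0 <= h x) /\
  (forall n x, (1<=n)%nat -> 0<x -> (-1)^n * D n x <= 0).

Lemma BH_D1 h D x : BH h D -> 0 < x -> 0 <= D 1%nat x.
Proof. intros (_&_&H) Hx. specialize (H 1%nat x (le_n _) Hx). simpl in H. lra. Qed.
Lemma BH_D2 h D x : BH h D -> 0 < x -> D 2%nat x <= 0.
Proof. intros (_&_&H) Hx. specialize (H 2%nat x ltac:(lia) Hx). simpl in H. lra. Qed.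
Lemma BH_D0 h D x : BH h D -> 0 < x -> 0 <= D 0%nat x.
Proof. intros ([H0 _]&H&_) Hx. rewrite H0; auto. Qed.

Lemma BH_mono h D n x y : BH h D -> 0 < x -> x <= y -> (forall z, 0 < z -> 0 <= D (S n) z) -> D n x <= D n y.
Proof.
  intros HB Hx Hxy Hp. destruct HB as [HS _].
  assert (0 <= RInt (D (S n)) x y). { apply RInt_ge_0; auto. apply exR; auto. apply (smooth_cont h D); auto. lra.
    intros z Hz; apply Hp; lra. }
  rewrite (ftc h D n x y HS) in H; lra.
Qed.

Lemma D0_incr h D x y : BH h D -> 0 < x -> x <= y -> D 0%nat x <= D 0%nat y.
Proof. intros HB Hx Hxy. apply (BH_mono h D 0); auto. intros; eapply BH_D1; eauto. Qed.
Lemma D1_decr h D x y : BH h D -> 0 < x -> x <= y -> D 1%nat y <= D 1%nat x.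
Proof.
  intros HB Hx Hxy. assert (- D 1%nat x <= - D 1%nat y); [|lra].
  destruct HB as [HS HB'].
  assert (HS' : smooth_on_pos (fun z => - h z) (fun n z => - D n z)).
  { split. intros z Hz; rewrite (proj1 HS z Hz); auto. intros n z Hz.
    apply derivable_pt_lim_opp. apply HS; auto. }
  assert (0 <= RInt (fun z => - D 2%nat z) x y). { apply RInt_ge_0; auto. apply exR; auto.
    apply (smooth_cont _ _ 2 HS'); auto. lra.
    intros z Hz. assert (D 2%nat z <= 0) by (apply (BH_D2 h D); [split; auto|lra]). lra. }
  rewrite (ftc _ _ 1 x y HS') in H; lra.
Qed.

Lemma inf_lemma (f : R -> R) :
  (forall x, 0 < x -> 0 <= f x) ->
  {L | 0 <= L /\ (forall x, 0 < x -> L <= f x) /\ forall e, 0<e -> exists x, 0 < x /\ f x < L + e}.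
Proof.
  intros Hf.
  destruct (completeness (fun y => exists x, 0 < x /\ y = - f x)) as [M [HM1 HM2]].
  - exists 0. intros y (x&Hx&->). specialize (Hf x Hx); lra.
  - exists (- f 1). exists 1; split; auto; lra.
  - exists (- M). split; [|split].
    + assert (M <= 0). { apply HM2. intros y (x&Hx&->). specialize (Hf x Hx); lra. } lra.
    + intros x Hx. assert (- f x <= M) by (apply HM1; eauto). lra.
    + intros e He. apply NNPP. intros Hn.
      assert (M <= M - e); [|lra]. apply HM2. intros y (x&Hx&->).
      destruct (Rlt_le_dec (f x) (-M + e)). exfalso; apply Hn; eauto. lra.
Qed.

Lemma aD1_bound h D b0 a : BH h D -> (forall x, 0 < x -> b0 <= D 0%nat x) -> 0 < a ->
  0 <= a * D 1%nat a <= D 0%nat a - b0.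
Proof.
  intros HB Hb Ha. split. apply Rmult_le_pos; [lra| eapply BH_D1; eauto].
  assert (Hk : forall d, 0 < d < a -> a * D 1%nat a <= D 0%nat a - b0 + d * D 1%nat a).
  { intros d Hd. destruct HB as [HS HB'].
    assert (RInt (fun _ => D 1%nat a) d a <= RInt (D 1%nat) d a).
    { apply RInt_le; try lra. apply (@ex_RInt_const R_CompleteNormedModule).
      apply exR; try lra. apply (smooth_cont h D); auto.
      intros z Hz. apply (D1_decr h D); [split; auto| |]; lra. }
    rewrite RInt_const, (ftc h D 0 d a HS) in H by lra. unfold scal in H; simpl in H.
    unfold mult in H; simpl in H. specialize (Hb d ltac:(lra)). lra. }
  assert (H1 := BH_D1 h D a HB Ha).
  destruct (Rle_dec (a * D 1%nat a) (D 0%nat a - b0)) as [|Hn]; auto. exfalso.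
  set (g := a * D 1%nat a - (D 0%nat a - b0)).
  assert (0 < g) by (unfold g; lra).
  set (d := Rmin (a/2) (g / (2 * (D 1%nat a + 1)))).
  assert (Hd1 : d <= g / (2 * (D 1%nat a + 1))) by apply Rmin_r.
  assert (Hd2 : d <= a/2) by apply Rmin_l.
  assert (0 < d). { unfold d. apply Rmin_pos. lra. apply Rdiv_lt_0_compat; lra. }
  specialize (Hk d ltac:(lra)).
  assert (d * D 1%nat a <= g / (2 * (D 1%nat a + 1)) * (D 1%nat a + 1)).
  { apply Rle_trans with (d * (D 1%nat a + 1)). nra. apply Rmult_le_compat_r; lra. }
  replace (g / (2 * (D 1%nat a + 1)) * (D 1%nat a + 1)) with (g/2) in H2 by (field; lra).
  unfold g in *. lra.
Qed.

Lemma closed_form h D a t B : BH h D -> 0<a -> a<t -> t<B ->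
  ex_RInt (fun s => Rmin (s/t) 1 * - D 2%nat s) a B /\
  RInt (fun s => Rmin (s/t) 1 * - D 2%nat s) a B = D 0%nat t / t + (a * D 1%nat a - D 0%nat a)/t - D 1%nat B.
Proof.
  intros HB Ha Hat HtB. pose proof (proj1 HB) as HS.
  assert (Cm : Cp (fun s => - D 2%nat s)) by (apply Cp_opp; apply (smooth_cont h D); auto).
  assert (Csm : Cp (fun s => s * - D 2%nat s)) by (apply Cp_mult; auto; apply Cp_id).
  assert (E1 : forall x, Rmin a t < x < Rmax a t -> /t * (x * - D 2%nat x) = Rmin (x/t) 1 * - D 2%nat x).
  { intros x Hx. rewrite Rmin_left, Rmax_right in Hx by lra. rewrite Rmin_left.
    unfold Rdiv; ring. apply Rlt_le. apply Rmult_lt_reg_r with t; try lra.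
    unfold Rdiv. rewrite Rmult_assoc, Rinv_l; lra. }
  assert (E2 : forall x, Rmin t B < x < Rmax t B -> - D 2%nat x = Rmin (x/t) 1 * - D 2%nat x).
  { intros x Hx. rewrite Rmin_left, Rmax_right in Hx by lra. rewrite Rmin_right. ring.
    apply Rlt_le. apply Rmult_lt_reg_r with t; try lra.
    unfold Rdiv. rewrite Rmult_assoc, Rinv_l; lra. }
  assert (X1 : ex_RInt (fun s => Rmin (s/t) 1 * - D 2%nat s) a t).
  { eapply ex_RInt_ext. apply E1. apply (@ex_RInt_scal R_CompleteNormedModule). apply exR; auto; lra. }
  assert (X2 : ex_RInt (fun s => Rmin (s/t) 1 * - D 2%nat s) t B).
  { eapply ex_RInt_ext. apply E2. apply exR; auto; lra. }
  split. eapply ex_RInt_Chasles; eauto.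
  rewrite <- (RInt_Chasles _ a t B X1 X2).
  rewrite <- (RInt_ext _ _ _ _ E1), <- (RInt_ext _ _ _ _ E2).
  rewrite (RInt_scal (fun s => s * - D 2%nat s)) by (apply exR; auto; lra).
  rewrite (RInt_eq _ (fun s => D 0%nat s - s * D 1%nat s)).
  rewrite (RInt_eq _ (fun s => - D 1%nat s)).
  unfold plus, scal; simpl. unfold mult; simpl. field. lra.
  - intros z Hz. apply isd_opp. apply is_derive_Reals. apply HS. eapply minpos; [| |apply Hz]; lra.
  - intros z Hz. apply Cm. eapply minpos; [| |apply Hz]; lra.
  - intros z Hz. assert (0 < z) by (eapply minpos; [| |apply Hz]; lra).
    eapply isd_val. apply isd_minus. apply is_derive_Reals, HS; auto.
    apply isd_mult. apply isd_id. apply is_derive_Reals, HS; auto. simpl; ring.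
  - intros z Hz. apply Csm. eapply minpos; [| |apply Hz]; lra.
Qed.

Lemma Rabs_lt_bound x e : -e < x -> x < e -> Rabs x < e.
Proof. intros. unfold Rabs. destruct (Rcase_abs x); lra. Qed.

Lemma converse (r : R -> R) : (forall t, 0 < t -> 0 < r t) -> bernstein (fun t => t * r t) ->
  exists (a b : R) (m : R -> R), cbf_triple a b m /\
     forall t, 0 < t -> rate_of_triple a b m t (r t).
Proof.
  intros hr (D & HS & Hpos & Hsign).
  assert (HB : BH (fun t => t * r t) D) by (split; auto).
  destruct (inf_lemma (D 0%nat)) as [b0 (Hb0 & Hb0l & Hb0e)]. intros; eapply BH_D0; eauto.
  destruct (inf_lemma (D 1%nat)) as [L1 (HL1 & HL1l & HL1e)]. intros; eapply BH_D1; eauto.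
  exists (2*L1), b0, (fun s => - D 2%nat s). split.
  - split; [lra|split; [lra|split]].
    + exists (fun n s => - D (S (S n)) s). split. split. intros; reflexivity.
      intros n x Hx. apply (derivable_pt_lim_opp (D (S (S n)))). apply HS; auto.
      intros n x Hx. specialize (Hsign (S (S n)) x ltac:(lia) Hx).
      replace ((-1) ^ S (S n)) with ((-1)^n) in Hsign by (simpl; ring). nra.
    + set (g := fun s => s / (1 + s) * - D 2%nat s).
      assert (Cg : Cp g). { apply Cp_mult. apply Cp_frac. apply Cp_opp. apply (smooth_cont (fun t => t * r t) D); auto. }
      assert (gpos : forall s, 0 < s -> 0 <= g s).
      { intros s Hs. unfold g. apply Rmult_le_pos. apply Rlt_le, Rdiv_lt_0_compat; lra.
        assert (D 2%nat s <= 0) by (eapply BH_D2; eauto). lra. }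
      assert (Hbd : forall a B, 0 < a -> a < 1 -> 1 < B -> RInt g a B <= D 0%nat 1).
      { intros a B Ha Ha1 HB1. destruct (closed_form (fun t => t * r t) D a 1 B HB Ha Ha1 HB1) as [X E].
        apply Rle_trans with (RInt (fun s => Rmin (s/1) 1 * - D 2%nat s) a B).
        apply RInt_le; auto. lra. apply exR; auto. lra.
        intros x Hx. unfold g. apply Rmult_le_compat_r.
        assert (D 2%nat x <= 0) by (eapply BH_D2; eauto; lra). lra.
        unfold Rmin. destruct (Rle_dec (x/1) 1).
        apply Rmult_le_reg_r with (1+x). lra. unfold Rdiv. rewrite Rmult_assoc, Rinv_l, Rinv_1 by lra. nra.
        apply Rmult_le_reg_r with (1+x). lra. unfold Rdiv. rewrite Rmult_assoc, Rinv_l by lra. lra.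
        rewrite E. assert (H1 := aD1_bound (fun t => t * r t) D b0 a HB Hb0l Ha). assert (H2 := BH_D1 (fun t => t * r t) D B HB ltac:(lra)).
        unfold Rdiv. rewrite Rinv_1. lra. }
      destruct (completeness (fun y => exists a B, 0 < a < 1 /\ 1 < B /\ y = RInt g a B)) as [l [Hl1 Hl2]].
      { exists (D 0%nat 1). intros y (a&B&Ha&HB1&->). apply Hbd; lra. }
      { exists (RInt g (1/2) 2). exists (1/2), 2. repeat split; lra. }
      exists l. apply improper_RInt. intros eps He.
      assert (exists a0 B0, 0 < a0 < 1 /\ 1 < B0 /\ l - eps < RInt g a0 B0) as (a0&B0&Ha0&HB0&Hy).
      { apply NNPP. intros Hn. assert (l <= l - eps); [|lra]. apply Hl2. intros y (a&B&Ha&HB1&->).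
        destruct (Rlt_le_dec (l - eps) (RInt g a B)); auto. exfalso; apply Hn; eauto. }
      exists a0, B0. split. lra. intros a B Ha HaB HB1.
      assert (Xg : forall u v, 0 < u -> 0 < v -> ex_RInt g u v) by (intros; apply exR; auto).
      assert (RInt g a B <= l) by (apply Hl1; exists a, B; repeat split; lra).
      assert (RInt g a0 B0 <= RInt g a B).
      { rewrite <- (RInt_Chasles g a a0 B) by (apply Xg; lra).
        rewrite <- (RInt_Chasles g a0 B0 B) by (apply Xg; lra).
        assert (0 <= RInt g a a0) by (apply RInt_ge_0; [lra|apply Xg; lra|intros; apply gpos; lra]).
        assert (0 <= RInt g B0 B) by (apply RInt_ge_0; [lra|apply Xg; lra|intros; apply gpos; lra]).
        unfold plus; simpl. lra. }
      split. apply Xg; lra. apply Rabs_lt_bound; lra.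
  - intros t Ht. exists (r t - L1 - b0 / t). split; [|field; lra].
    apply improper_RInt. intros eps He.
    destruct (Hb0e (eps * t / 2)) as (x0 & Hx0 & Hx0'). nra.
    destruct (HL1e (eps / 2)) as (x1 & Hx1 & Hx1'). lra.
    exists (Rmin x0 t), (Rmax x1 t). split. apply Rmin_pos; lra.
    intros a B Ha Had HBM.
    assert (a < x0) by (eapply Rlt_le_trans; [apply Had| apply Rmin_l]).
    assert (a < t) by (eapply Rlt_le_trans; [apply Had| apply Rmin_r]).
    assert (x1 < B) by (eapply Rle_lt_trans; [apply Rmax_l| apply HBM]).
    assert (t < B) by (eapply Rle_lt_trans; [apply Rmax_r| apply HBM]).
    destruct (closed_form (fun t => t * r t) D a t B HB Ha ltac:(lra) ltac:(lra)) as [X E]. split; auto.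
    rewrite E. rewrite (proj1 HS t Ht).
    assert (Hq := aD1_bound (fun t => t * r t) D b0 a HB Hb0l Ha).
    assert (D 0%nat a <= D 0%nat x0) by (apply (D0_incr (fun t => t * r t) D); auto; lra).
    assert (D 1%nat B <= D 1%nat x1) by (apply (D1_decr (fun t => t * r t) D); auto; lra).
    assert (L1 <= D 1%nat B) by (apply HL1l; lra).
    set (u := a * D 1%nat a) in *. set (v := D 0%nat a - b0) in *.
    replace (t * r t / t + (u - D 0%nat a) / t - D 1%nat B - (r t - L1 - b0 / t))
      with (u / t - v / t - (D 1%nat B - L1)) by (unfold v; field; lra).
    assert (0 <= u / t) by (apply Rdiv_le_0_compat; lra).
    assert (u / t <= v / t) by (apply Rmult_le_compat_r; [apply Rlt_le, Rinv_0_lt_compat|]; lra).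
    assert (v / t < eps / 2).
    { apply Rmult_lt_reg_r with t; auto. unfold Rdiv. rewrite Rmult_assoc, Rinv_l by lra. unfold v. lra. }
    apply Rabs_lt_bound; lra.
Qed.

Definition Gf (m : R -> R) (c : R) := RInt (fun s => s * m s) 1 c - c * RInt m 1 c.

Lemma ident m c A B : Cp m -> 0 < A -> A < c -> c < B ->
  c * RInt (fun s => Rmin (s/c) 1 * m s) A B = RInt (fun s => s * m s) A 1 + c * RInt m 1 B + Gf m c.
Proof.
  intros Cm HA HAc HcB.
  assert (Csm : Cp (fun s => s * m s)) by (apply Cp_mult; auto; apply Cp_id).
  assert (E1 : forall x, Rmin A c < x < Rmax A c -> /c * (x * m x) = Rmin (x/c) 1 * m x).
  { intros x Hx. rewrite Rmin_left, Rmax_right in Hx by lra. rewrite Rmin_left.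
    unfold Rdiv; ring. apply Rlt_le. apply Rmult_lt_reg_r with c; try lra.
    unfold Rdiv. rewrite Rmult_assoc, Rinv_l; lra. }
  assert (E2 : forall x, Rmin c B < x < Rmax c B -> m x = Rmin (x/c) 1 * m x).
  { intros x Hx. rewrite Rmin_left, Rmax_right in Hx by lra. rewrite Rmin_right. ring.
    apply Rlt_le. apply Rmult_lt_reg_r with c; try lra.
    unfold Rdiv. rewrite Rmult_assoc, Rinv_l, Rmult_1_r; lra. }
  assert (X1 : ex_RInt (fun s => Rmin (s/c) 1 * m s) A c).
  { eapply ex_RInt_ext. apply E1. apply (@ex_RInt_scal R_CompleteNormedModule). apply exR; auto; lra. }
  assert (X2 : ex_RInt (fun s => Rmin (s/c) 1 * m s) c B).
  { eapply ex_RInt_ext. apply E2. apply exR; auto; lra. }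
  rewrite <- (RInt_Chasles _ A c B X1 X2).
  rewrite <- (RInt_ext _ _ _ _ E1), <- (RInt_ext _ _ _ _ E2).
  rewrite (RInt_scal (fun s => s * m s)) by (apply exR; auto; lra).
  rewrite <- (RInt_Chasles (fun s => s * m s) A 1 c) by (apply exR; auto; lra).
  rewrite <- (RInt_Chasles m 1 c B) by (apply exR; auto; lra).
  unfold Gf, plus, scal; simpl. unfold mult; simpl. field. lra.
Qed.

Lemma pick3 (f1 f2 f3 : R -> R) l1 l2 l3 e x :
  improper_int_pos f1 l1 -> improper_int_pos f2 l2 -> improper_int_pos f3 l3 -> 0 < e -> 0 < x ->
  exists A B, 0 < A /\ A < x /\ A < 1 /\ x < B /\ 2 < B /\
    Rabs (RInt f1 A B - l1) < e /\ Rabs (RInt f2 A B - l2) < e /\ Rabs (RInt f3 A B - l3) < e.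
Proof.
  intros H1 H2 H3 He Hx. rewrite improper_RInt in H1, H2, H3.
  destruct (H1 e He) as (d1&M1&Hd1&K1). destruct (H2 e He) as (d2&M2&Hd2&K2).
  destruct (H3 e He) as (d3&M3&Hd3&K3).
  set (A := Rmin (Rmin d1 d2) (Rmin d3 (Rmin x 1)) / 2).
  set (B := Rmax (Rmax M1 M2) (Rmax M3 (Rmax x 2)) + 1).
  assert (0 < Rmin (Rmin d1 d2) (Rmin d3 (Rmin x 1))) by (repeat apply Rmin_pos; lra).
  set (mn := Rmin (Rmin d1 d2) (Rmin d3 (Rmin x 1))) in *.
  assert (mn <= Rmin d1 d2) by apply Rmin_l. assert (mn <= Rmin d3 (Rmin x 1)) by apply Rmin_r.
  assert (Rmin d1 d2 <= d1) by apply Rmin_l. assert (Rmin d1 d2 <= d2) by apply Rmin_r.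
  assert (Rmin d3 (Rmin x 1) <= d3) by apply Rmin_l. assert (Rmin d3 (Rmin x 1) <= Rmin x 1) by apply Rmin_r.
  assert (Rmin x 1 <= x) by apply Rmin_l. assert (Rmin x 1 <= 1) by apply Rmin_r.
  set (mx := Rmax (Rmax M1 M2) (Rmax M3 (Rmax x 2))) in *.
  assert (Rmax M1 M2 <= mx) by apply Rmax_l. assert (Rmax M3 (Rmax x 2) <= mx) by apply Rmax_r.
  assert (M1 <= Rmax M1 M2) by apply Rmax_l. assert (M2 <= Rmax M1 M2) by apply Rmax_r.
  assert (M3 <= Rmax M3 (Rmax x 2)) by apply Rmax_l. assert (Rmax x 2 <= Rmax M3 (Rmax x 2)) by apply Rmax_r.
  assert (x <= Rmax x 2) by apply Rmax_l. assert (2 <= Rmax x 2) by apply Rmax_r.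
  unfold A, B in *.
  destruct (K1 (mn/2) (mx+1) ltac:(lra) ltac:(lra) ltac:(lra)) as [_ Q1].
  destruct (K2 (mn/2) (mx+1) ltac:(lra) ltac:(lra) ltac:(lra)) as [_ Q2].
  destruct (K3 (mn/2) (mx+1) ltac:(lra) ltac:(lra) ltac:(lra)) as [_ Q3].
  exists (mn/2), (mx+1). repeat split; try lra; auto.
Qed.

Lemma Gf1 m : Gf m 1 = 0.
Proof. unfold Gf. rewrite !(@RInt_point R_CompleteNormedModule). simpl. unfold zero; simpl. ring. Qed.

Lemma Rabs_sub x y : Rabs (x - y) <= Rabs x + Rabs y.
Proof. unfold Rabs; repeat destruct Rcase_abs; lra. Qed.

Lemma bound3 t al be ga e : 0 < t -> Rabs al < e -> Rabs be < e -> Rabs ga < e ->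
  Rabs (t*al - be - (t-1)*(2*ga - be)) <= (t + 2 + 3*Rabs(t-1)) * e.
Proof.
  intros Ht Ha Hb Hg.
  eapply Rle_trans. apply Rabs_sub. eapply Rle_trans. apply Rplus_le_compat_r. apply Rabs_sub.
  rewrite !Rabs_mult, (Rabs_pos_eq t) by lra.
  assert (Rabs (2*ga - be) <= 2*Rabs ga + Rabs be).
  { eapply Rle_trans. apply Rabs_sub. rewrite Rabs_mult, Rabs_pos_eq by lra. lra. }
  assert (0 <= Rabs (t-1)) by apply Rabs_pos.
  assert (Rabs (t-1) * Rabs (2*ga - be) <= Rabs (t-1) * (3*e)).
  { apply Rmult_le_compat_l; auto. lra. }
  assert (t * Rabs al <= t * e) by (apply Rmult_le_compat_l; lra). assert (0 <= Rabs be) by apply Rabs_pos. lra.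
Qed.

Definition Dfor (m : R -> R) (Dm : nat -> R -> R) (b a I1 K : R) : nat -> R -> R :=
  fun n => match n with
  | O => fun t => b + t*(a/2) + I1 + (t-1)*K + (RInt (fun s => s * m s) 1 t - t * RInt m 1 t)
  | 1%nat => fun t => a/2 + K - RInt m 1 t
  | S (S k) => fun t => - Dm k t end.

Lemma forward (r : R -> R) : (forall t, 0 < t -> 0 < r t) ->
  (exists (a b : R) (m : R -> R), cbf_triple a b m /\
     forall t, 0 < t -> rate_of_triple a b m t (r t)) -> bernstein (fun t => t * r t).
Proof.
  intros hr (a & b & m & (Ha & Hb & (Dm & HSm & Hcm) & _) & Hrate).
  assert (Cm : Cp m) by exact (smooth_cont0 m Dm HSm).
  assert (mpos : forall x, 0 < x -> 0 <= m x).
  { intros x Hx. specialize (Hcm 0%nat x Hx). simpl in Hcm. rewrite (proj1 HSm x Hx) in Hcm. lra. }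
  destruct (Hrate 1 ltac:(lra)) as (I1 & Hi1 & _).
  destruct (Hrate 2 ltac:(lra)) as (I2 & Hi2 & _).
  set (K := 2*I2 - I1 - Gf m 2).
  assert (Key : forall t, 0 < t -> t * r t = b + t*(a/2) + I1 + (t-1)*K + Gf m t).
  { intros t Ht. destruct (Hrate t Ht) as (It & Hit & Hrt).
    assert (Hz : t*It - (I1 + (t-1)*K + Gf m t) = 0).
    { apply zero_eps. intros e He.
      set (C := t + 2 + 3*Rabs(t-1)).
      assert (HC : 0 < C) by (unfold C; assert (0 <= Rabs (t-1)) by apply Rabs_pos; lra).
      destruct (pick3 _ _ _ It I1 I2 (e/C) t Hit Hi1 Hi2) as (A&B&HA&HAt&HA1&HtB&HB2&Q1&Q2&Q3).
      apply Rdiv_lt_0_compat; lra. auto.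
      assert (Et := ident m t A B Cm HA HAt HtB).
      assert (E1 := ident m 1 A B Cm HA HA1 ltac:(lra)).
      assert (E2 := ident m 2 A B Cm HA ltac:(lra) HB2).
      rewrite Gf1 in E1.
      set (Pt := RInt (fun s => Rmin (s / t) 1 * m s) A B) in *.
      set (P1 := RInt (fun s => Rmin (s / 1) 1 * m s) A B) in *.
      set (P2 := RInt (fun s => Rmin (s / 2) 1 * m s) A B) in *.
      set (Q := RInt m 1 B) in *. set (SA := RInt (fun s => s * m s) A 1) in *.
      assert (H2Q : 2*P2 - P1 - Gf m 2 = Q) by lra.
      assert (HH : (t-1)*(2*P2 - P1 - Gf m 2) = (t-1)*Q) by (rewrite H2Q; ring).
      replace (t * It - (I1 + (t - 1) * K + Gf m t)) with
        (t*(It - Pt) - (I1 - P1) - (t-1)*(2*(I2 - P2) - (I1 - P1))) by (unfold K; lra).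
      replace e with (C * (e / C)) by (field; lra).
      apply bound3; auto; rewrite Rabs_minus_sym; auto. }
    rewrite Hrt. field_simplify; [|lra]. lra. }
  assert (Ksign : forall x, 0 < x -> 0 <= a/2 + K - RInt m 1 x).
  { intros x Hx. apply Rnot_lt_le. intros Hneg.
    set (d := - (a/2 + K - RInt m 1 x)).
    destruct (pick3 _ _ _ I1 I1 I2 (d/4) x Hi1 Hi1 Hi2) as (A&B&HA&HAt&HA1&HtB&HB2&Q1&_&Q3).
    unfold d; lra. auto.
    assert (E1 := ident m 1 A B Cm HA HA1 ltac:(lra)).
    assert (E2 := ident m 2 A B Cm HA ltac:(lra) HB2).
    rewrite Gf1 in E1.
    assert (HQ : RInt m 1 x + RInt m x B = RInt m 1 B).
    { apply (RInt_Chasles m 1 x B); apply exR; auto; lra. }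
    assert (0 <= RInt m x B) by (apply RInt_ge_0; [lra|apply exR; auto; lra|intros; apply mpos; lra]).
    unfold Rabs in Q1, Q3. destruct (Rcase_abs _) in Q1; destruct (Rcase_abs _) in Q3; unfold d, K in *; lra. }
  exists (Dfor m Dm b a I1 K). split; [split|split].
  - intros x Hx. simpl. rewrite Key by auto. unfold Gf. ring.
  - intros n x Hx. destruct n as [|[|n]].
    + apply is_derive_Reals. simpl.
      assert (Csm : Cp (fun s => s * m s)) by (apply Cp_mult; auto; apply Cp_id).
      eapply isd_val.
      apply isd_plus. apply isd_plus. apply isd_plus. apply isd_plus. apply isd_const.
      apply isd_mult. apply isd_id. apply isd_const. apply isd_const.
      apply isd_mult. apply isd_minus. apply isd_id. apply isd_const. apply isd_const.
      apply isd_minus. apply deriv_RInt; auto. apply isd_mult. apply isd_id. apply deriv_RInt; auto.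
      simpl. ring.
    + apply is_derive_Reals. simpl. eapply isd_val.
      apply isd_minus. apply isd_const. apply deriv_RInt; auto.
      rewrite (proj1 HSm x Hx). ring.
    + simpl. apply (derivable_pt_lim_opp (Dm n)). apply HSm; auto.
  - intros x Hx. specialize (hr x Hx). nra.
  - intros n x Hn Hx. destruct n as [|[|n]]. lia.
    + simpl. specialize (Ksign x Hx). lra.
    + simpl. specialize (Hcm n x Hx). nra.
Qed.

Theorem theoremB2 (r : R -> R) (hr : forall t, 0 < t -> 0 < r t) :
  (exists (a b : R) (m : R -> R), cbf_triple a b m /\
     forall t, 0 < t -> rate_of_triple a b m t (r t))
  <-> bernstein (fun t => t * r t).
Proof.
  split. apply forward; auto. apply converse; auto.
Qed.
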